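(* Let $M$ be a regular indecomposable module which is a source module with center $c$ and radius $r$. Then $\sigma M$ is a source module with center $c$ and radius $r+1$.
   Context: Let $k$ be a field and $n\ge 3$. $T(n)$ is the $n$-regular tree; fix a bipartite orientation $\Omega$ (every vertex a sink or a source), $\sigma\Omega$ the opposite orientation. A module is a finite-dimensional $k$-representation of $(T(n),\Omega)$ or $(T(n),\sigma\Omega)$. The shift functor $\sigma$ is the composition of the Bernstein–Gelfand–Ponomarev reflection functors at all sinks, sending representations of $(T(n),\Omega)$ to representations of $(T(n),\sigma\Omega)$ and vice versa. An indecomposable module $M$ is regular if $\sigma^tM\neq 0$ for all $t\in\mathbb Z$ ($\sigma^t$ for $t<0$ being powers of the left adjoint $\sigma^-$). A path of length $t$ is a sequence $(a_0,\dots,a_t)$ of vertices, consecutive ones neighbours, with $a_{i-1}\neq a_{i+1}$; a path of length $2r$ has center $a_r$, radius $r$. For indecomposable $M$, $T(M)$ is the full subgraph on vertices $a$ with $M_a\neq0$; a diameter path is a path in $T(M)$ of maximal length $d(M)$; all diameter paths share a center, the center of $M$; $r(M)=\lfloor d(M)/2\rfloor$. $M$ is a source module if its diameter paths start and end at sources of the orientation of the quiver of which $M$ is a representation. *)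

(* Defs.v *)
From HB Require Import structures.
From mathcomp Require Import all_boot all_order all_algebra.
Set Implicit Arguments. Unset Strict Implicit. Unset Printing Implicit Defensive.
Import GRing.Theory.
Local Open Scope ring_scope.

(* The n-regular tree T(n).  Vertices are reduced words over 'I_n (no two  *)
(* consecutive equal letters), i.e. the Cayley graph of the free product   *)
Section Tree.
Variable n : nat.

Definition neqrel : rel 'I_n := fun a b => a != b.
Definition vert := {w : seq 'I_n | sorted neqrel w}.

Definition root : vert := exist _ [::] isT.

(* the i-th neighbour of a vertex; every vertex has exactly n neighbours *)
Definition nbw (a : seq 'I_n) (i : 'I_n) : seq 'I_n :=
  if a is h :: s then (if i == h then s else i :: a) else [:: i].

Lemma nbw_sorted (a : seq 'I_n) (i : 'I_n) :
  sorted neqrel a -> sorted neqrel (nbw a i).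
Proof.
case: a => [|h s] //=.
case: (boolP (i == h)) => [_|ne] H; first exact: path_sorted H.
by rewrite /= H andbT.
Qed.

Definition nb (a : vert) (i : 'I_n) : vert :=
  exist _ (nbw (val a) i) (nbw_sorted i (valP a)).

Definition adj (x y : vert) : bool :=
  ((val x != [::]) && (behead (val x) == val y)) ||
  ((val y != [::]) && (behead (val y) == val x)).

(* Bipartite orientations: in orientation p, the sinks are the vertices
   whose word length has parity p; all other vertices are sources.
   Omega = p, sigma Omega = ~~ p. *)
Definition is_sink (p : bool) (v : vert) : bool := odd (size (val v)) == p.
Definition is_source (p : bool) (v : vert) : bool := ~~ is_sink p v.
Definition arrow (p : bool) (x y : vert) : bool := adj x y && is_sink p y.

(* Representations (row-vector convention: the map M_x -> M_y is a matrix  *)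
(* of size dim x * dim y).  Entries arr x y for non-arrows are ignored by  *)
(* every notion below.                                                     *)
Variable k : fieldType.

Record rep (p : bool) := Rep {
  dim : vert -> nat;
  arr : forall x y : vert, 'M[k]_(dim x, dim y) }.

Definition fin_dim p (M : rep p) : Prop :=
  exists s : seq vert, forall v, dim M v != 0%N -> v \in s.

Definition nonzero p (M : rep p) : Prop := exists v, dim M v != 0%N.

Definition mxe m m' (A : 'M[k]_(m, m')) (r c : nat) : k :=
  match (insub r : option 'I_m), (insub c : option 'I_m') with
  | Some r', Some c' => A r' c'
  | _, _ => 0
  end.

Section Reflection.
Variables (p : bool) (M : rep p).

(* the map  (+)_{b nb of a} M_b -> M_a  (used at sinks) *)
Definition inmap (a : vert) :
  'M[k]_((\sum_(i < n) dim M (nb a i))%N, dim M a) :=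
  \mxcol_(i < n) arr M (nb a i) a.
Definition kerbasis (a : vert) := row_base (kermx (inmap a)).

(* the map  M_a -> (+)_{b nb of a} M_b  (used at sources) *)
Definition outmap (a : vert) :
  'M[k]_(dim M a, (\sum_(i < n) dim M (nb a i))%N) :=
  \mxrow_(i < n) arr M a (nb a i).
(* the cokernel projection (columns span the right null space of outmap) *)
Definition cokproj (a : vert) := (row_base (kermx (outmap a)^T))^T.

(* sigma: BGP reflection at all sinks of p *)
Definition sig_dim (a : vert) : nat :=
  if is_sink p a then \rank (kermx (inmap a)) else dim M a.
Definition sig_arr (x y : vert) : 'M[k]_(sig_dim x, sig_dim y) :=
  \matrix_(r, c)
    (if arrow (~~ p) x y then
       \sum_(i < n | nb x i == y) mxe (submxrow (kerbasis x) i) r c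
     else 0).
Definition sigma : rep (~~ p) := @Rep (~~ p) sig_dim sig_arr.

(* sigma^- : BGP reflection (left adjoint) at all sources of p *)
Definition sigm_dim (a : vert) : nat :=
  if is_source p a then \rank (kermx (outmap a)^T) else dim M a.
Definition sigm_arr (x y : vert) : 'M[k]_(sigm_dim x, sigm_dim y) :=
  \matrix_(r, c)
    (if arrow (~~ p) x y then
       \sum_(i < n | nb y i == x) mxe (submxcol (cokproj y) i) r c
     else 0).
Definition sigmam : rep (~~ p) := @Rep (~~ p) sigm_dim sigm_arr.

End Reflection.

Fixpoint sigma_pow (t : nat) (p : bool) (M : rep p) : rep (iter t negb p) :=
  match t return rep (iter t negb p) with
  | 0 => M
  | t'.+1 => sigma (sigma_pow t' M)
  end.

Fixpoint sigmam_pow (t : nat) (p : bool) (M : rep p) : rep (iter t negb p) :=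
  match t return rep (iter t negb p) with
  | 0 => M
  | t'.+1 => sigmam (sigmam_pow t' M)
  end.

Definition indecomposable p (M : rep p) : Prop :=
  nonzero M /\
  forall U W : forall v, 'M[k]_(dim M v),
    (forall x y, arrow p x y ->
       (U x *m arr M x y <= U y)%MS /\ (W x *m arr M x y <= W y)%MS) ->
    (forall v, (U v :&: W v == (0 : 'M[k]_(dim M v)))%MS &&
               (U v + W v == (1%:M : 'M[k]_(dim M v)))%MS) ->
    (forall v, U v = 0) \/ (forall v, W v = 0).

Definition regular p (M : rep p) : Prop :=
  indecomposable M /\
  forall t : nat, nonzero (sigma_pow t M) /\ nonzero (sigmam_pow t M).

(* paths (a_0, ..., a_t), given as the sequence of vertices; length = size - 1 *)
Definition is_tpath (l : seq vert) : bool :=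
  [&& (0 < size l)%N, sorted adj l &
      all (fun i => nth root l i != nth root l i.+2) (iota 0 (size l).-2)].

Definition path_in p (M : rep p) (l : seq vert) : bool :=
  is_tpath l && all (fun a => dim M a != 0%N) l.

Definition is_diam p (M : rep p) (l : seq vert) : Prop :=
  path_in M l /\ forall l', path_in M l' -> (size l' <= size l)%N.

Definition source_module p (M : rep p) : Prop :=
  [/\ fin_dim M, exists l, is_diam M l &
      forall l, is_diam M l ->
        is_source p (head root l) && is_source p (last root l)].

Definition center_radius p (M : rep p) (c : vert) (r : nat) : Prop :=
  forall l, is_diam M l -> size l = (2 * r).+1 /\ nth root l r = c.

End Tree.

(* Main.v *)
Require Import Defs.
From mathcomp Require Import all_boot all_order all_algebra.
From mathcomp Require Import zify.
Require Import Defs.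
Set Implicit Arguments. Unset Strict Implicit. Unset Printing Implicit Defensive.


Lemma suffix_consE (T : eqType) (s t : seq T) x :
  suffix s (x :: t) = (s == x :: t) || suffix s t.
Proof.
apply/idP/idP.
  move/suffixP=> [[|y u] E]; first by rewrite /= in E; rewrite E eqxx.
  case: E => _ ->; apply/orP; right; exact: suffix_suffix.
case/orP=> [/eqP->|]; first exact: suffix_refl.
by move=> H; apply: suffix_trans H (suffix_cons _ _).
Qed.

Lemma suffix_size_eq (T : eqType) (s t : seq T) :
  suffix s t -> size s = size t -> s = t.
Proof.
move/suffixP=> [u ->]; rewrite size_cat; case: u => //= x u.
move=> /= E; exfalso; lia.
Qed.

Lemma nb_adj n (x : vert n) i : adj x (nb x i).
Proof.
rewrite /adj /nb /=; case: x => [[|h s] Hs] /=; first by [].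
by case: ifP => _ /=; rewrite eqxx ?orbT.
Qed.

Lemma adjC n (x y : vert n) : adj x y = adj y x.
Proof. by rewrite /adj orbC. Qed.

Lemma adj_nb n (x y : vert n) : adj x y -> exists i, y = nb x i.
Proof.
case: x y => [sx Hx] [sy Hy]; rewrite /adj /=.
case/orP=> /andP[ne /eqP E].
  case: sx Hx ne E => [|h s] Hx //= _ E; exists h; apply: val_inj => /=.
  by rewrite eqxx.
case: sy Hy ne E => [|h s] Hy //= _ E; subst s; exists h; apply: val_inj => /=.
case: sx Hx Hy => [|h' s'] //= _ /andP[ne _].
by rewrite /neqrel in ne; rewrite (negbTE ne).
Qed.

Lemma nb_inj n (x : vert n) : injective (nb x).
Proof.
move=> i j /(congr1 val); case: x => [[|h s] Hs] /=; first by case.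
case: (boolP (i == h)) => [/eqP->|ne]; case: (boolP (j == h)) => [/eqP->|ne'] //.
- by move/(congr1 size)=> /=; lia.
- by move/(congr1 size)=> /=; lia.
by case.
Qed.

Lemma adj_parity n (x y : vert n) : adj x y -> odd (size (val y)) = ~~ odd (size (val x)).
Proof.
case: x y => [sx Hx] [sy Hy]; rewrite /adj /=.
case/orP=> /andP[ne /eqP E].
  by case: sx Hx ne E => [|h s] //= _ _ ->; rewrite negbK.
by case: sy Hy ne E => [|h s] //= _ _ ->.
Qed.

(* branch of the tree at b through neighbour a *)
Definition side n (b a w : vert n) : bool :=
  if size (val b) < size (val a) then suffix (val a) (val w)
  else ~~ suffix (val b) (val w).

Lemma adj_cases n (x y : vert n) :
  adj x y -> (exists h, val x = h :: val y) \/ (exists h, val y = h :: val x).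
Proof.
rewrite /adj; case/orP=> /andP[ne /eqP E].
  by left; case: (val x) ne E => [|h s] //= _ <-; exists h.
by right; case: (val y) ne E => [|h s] //= _ <-; exists h.
Qed.

Lemma side_cross n (b a x y : vert n) :
  adj b a -> adj x y -> side b a x -> ~~ side b a y -> x = a /\ y = b.
Proof.
rewrite /side => Hba Hxy.
case: (adj_cases Hba) => [[h Eb]|[h Ea]].
  rewrite Eb /= ltnNge leqnSn /= negbK => Sx Sy.
  case: (adj_cases Hxy) => [[h' Ex]|[h' Ey]].
    by move: Sx; rewrite Ex suffix_consE Sy orbT.
  move: Sy; rewrite Ey suffix_consE (negbTE Sx) orbF => /eqP E.
  split; apply: val_inj; last by rewrite Eb Ey.
  by case: E => _ E'; exact: (esym E').
rewrite Ea /= ltnSn => Sx Sy.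
case: (adj_cases Hxy) => [[h' Ex]|[h' Ey]].
  move: Sx; rewrite Ex suffix_consE (negbTE Sy) orbF => /eqP E.
  split; apply: val_inj; first by rewrite Ea Ex.
  by case: E => _ E'; exact: (esym E').
by move: Sy; rewrite Ey suffix_consE Sx orbT.
Qed.

Lemma side_a n (b a : vert n) : adj b a -> side b a a.
Proof.
rewrite /side => Hba; case: (adj_cases Hba) => [[h Eb]|[h Ea]].
  rewrite Eb /= ltnNge leqnSn /=; apply/negP=> /size_suffix /=; lia.
by rewrite Ea /= ltnSn suffix_refl.
Qed.

Lemma side_b n (b a : vert n) : adj b a -> ~~ side b a b.
Proof.
rewrite /side => Hba; case: (adj_cases Hba) => [[h Eb]|[h Ea]].
  by rewrite Eb /= ltnNge leqnSn /= -Eb suffix_refl.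
rewrite Ea /= ltnSn; apply/negP=> /size_suffix /=; lia.
Qed.

Lemma side_other n (b a c : vert n) : adj b a -> adj b c -> c != a -> ~~ side b a c.
Proof.
rewrite /side => Hba Hbc ca; case: (adj_cases Hba) => [[h Eb]|[h Ea]].
  rewrite Eb /= ltnNge leqnSn /= negbK.
  case: (adj_cases Hbc) => [[h' Eb']|[h' Ec]].
    by move: ca; rewrite Eb in Eb'; case: Eb' => _ E; rewrite (val_inj E) eqxx.
  by rewrite Ec Eb suffix_cons.
rewrite Ea /= ltnSn; apply/negP=> S.
case: (adj_cases Hbc) => [[h' Eb']|[h' Ec]].
  by move: (size_suffix S); rewrite Eb' /=; lia.
move/negP: ca; apply; apply/eqP/val_inj; rewrite Ea; symmetry.
by apply: (suffix_size_eq S); rewrite Ec.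
Qed.

Lemma tpathP n (l : seq (vert n)) : is_tpath l <->
  [/\ 0 < size l,
      forall i, i.+1 < size l -> adj (nth (root n) l i) (nth (root n) l i.+1) &
      forall i, i.+2 < size l -> nth (root n) l i != nth (root n) l i.+2].
Proof.
rewrite /is_tpath; split.
  case/and3P=> s0 /(sortedP (root n)) H /allP A; split=> // i Hi.
  by apply: A; rewrite mem_iota add0n; lia.
case=> s0 H A; rewrite s0 /=; apply/andP; split; first exact/(sortedP (root n)).
apply/allP=> i; rewrite mem_iota add0n => Hi; apply: A; lia.
Qed.

Lemma nth_infix T (x0 : T) (s1 s2 s3 : seq T) i :
  i < size s2 -> nth x0 (s1 ++ s2 ++ s3) (size s1 + i) = nth x0 s2 i.
Proof. by move=> Hi; rewrite nth_cat ltnNge leq_addr /= addKn nth_cat Hi. Qed.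

Lemma tpath_infix n (s1 s2 s3 : seq (vert n)) :
  is_tpath (s1 ++ s2 ++ s3) -> 0 < size s2 -> is_tpath s2.
Proof.
move/tpathP=> [_ H A] s0; apply/tpathP; split=> // i Hi.
  have := H (size s1 + i); rewrite -addnS !nth_infix ?(ltnW Hi) //.
  by apply; rewrite !size_cat; lia.
have := A (size s1 + i); rewrite -!addnS !nth_infix ?(ltnW Hi) ?(ltnW (ltnW Hi)) //.
by apply; rewrite !size_cat; lia.
Qed.

Lemma tpath_rev n (l : seq (vert n)) : is_tpath (rev l) -> is_tpath l.
Proof.
move/tpathP=> [s0 H A]; rewrite size_rev in s0 H A; apply/tpathP; split=> // i Hi.
  have := H (size l - i.+2) ltac:(lia).
  rewrite !nth_rev; [|lia|lia].
  have ->: (size l - (size l - i.+2).+2) = i by lia.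
  have ->: (size l - (size l - i.+2).+1) = i.+1 by lia.
  by rewrite adjC.
have := A (size l - i.+3) ltac:(lia).
rewrite !nth_rev; [|lia|lia].
have ->: (size l - (size l - i.+3).+1) = i.+2 by lia.
have ->: (size l - (size l - i.+3).+3) = i by lia.
by rewrite eq_sym.
Qed.

Lemma tpath_revE n (l : seq (vert n)) : is_tpath (rev l) = is_tpath l.
Proof.
apply/idP/idP; first exact: tpath_rev.
by move=> H; apply: tpath_rev; rewrite revK.
Qed.

Lemma tpath_cons n (b : vert n) l :
  is_tpath l -> adj b (nth (root n) l 0) ->
  (1 < size l -> b != nth (root n) l 1) -> is_tpath (b :: l).
Proof.
move/tpathP=> [s0 H A] Hb Hne; apply/tpathP; split=> // [[|i]|[|i]] /= Hi.
- exact: Hb.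
- by apply: H.
- by apply: Hne.
by apply: A.
Qed.

Lemma tpath1 n (b : vert n) : is_tpath [:: b].
Proof. by apply/tpathP; split=> // [[|i]|[|i]]. Qed.

Lemma adj_neq n (x y : vert n) : adj x y -> x != y.
Proof.
move=> H; apply/negP=> /eqP E; subst y.
by move: (adj_parity H); case: (odd _).
Qed.



Local Open Scope ring_scope.

Lemma mxe_id (k : fieldType) m (X : 'M[k]_m) : \matrix_(r, c) mxe X r c = X.
Proof.
apply/matrixP=> i j; rewrite mxE /mxe.
case: insubP => [i' _ Ei|]; last by rewrite ltn_ord.
case: insubP => [j' _ Ej|]; last by rewrite ltn_ord.
by rewrite (val_inj Ei) (val_inj Ej).
Qed.

Lemma scalar1_eq0 (k : fieldType) m : (1%:M : 'M[k]_m) = 0 -> m = 0.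
Proof. by move=> E; have := mxrank1 k m; rewrite E mxrank0. Qed.



Lemma arrow_src_not_sink n p (x y : vert n) :
  arrow p x y -> ~~ is_sink p x.
Proof.
case/andP=> H; rewrite /is_sink (adj_parity H).
by case: (odd _); case: p.
Qed.

Lemma split_decomp n k p (M : rep n k p) (b a : vert n)
  (X Y : 'M[k]_(dim M b)) :
  indecomposable M -> adj b a -> is_sink p b ->
  (X :&: Y == (0 : 'M[k]_(dim M b)))%MS -> (X + Y == (1%:M : 'M[k]_(dim M b)))%MS ->
  (arr M a b <= X)%MS ->
  (forall j, nb b j != a -> (arr M (nb b j) b <= Y)%MS) ->
  dim M a != 0%N -> forall c, adj b c -> c != a -> dim M c = 0%N.
Proof.
move=> [_ Hind] Hba Sb XY0 XY1 Ha Ho da c Hbc ca.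
pose Xf v : 'M[k]_(dim M v) := if v == b then \matrix_(r, s) mxe X r s else 0.
pose Yf v : 'M[k]_(dim M v) := if v == b then \matrix_(r, s) mxe Y r s else 1%:M.
pose U v : 'M[k]_(dim M v) := if side b a v then 1%:M else Xf v.
pose W v : 'M[k]_(dim M v) := if side b a v then 0 else Yf v.
have XfB : Xf b = X by rewrite /Xf eqxx mxe_id.
have YfB : Yf b = Y by rewrite /Yf eqxx mxe_id.
have := Hind U W.
case.
- move=> x y Hxy; have xb : x != b.
    by apply: contraNneq (arrow_src_not_sink Hxy) => ->.
  have Axy : adj x y by case/andP: Hxy.
  rewrite /U /W; case: (boolP (side b a x)) => Sx; case: (boolP (side b a y)) => Sy.
  + by rewrite mul0mx sub0mx submx1.
  + have [-> ->] := side_cross Hba Axy Sx Sy.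
    by rewrite mul1mx XfB Ha mul0mx sub0mx.
  + have Ayx : adj y x by rewrite adjC.
    have [_ Ex] := side_cross Hba Ayx Sy Sx.
    by rewrite Ex eqxx in xb.
  + rewrite /Xf /Yf (negbTE xb) mul0mx sub0mx mul1mx; split => //.
    case: (boolP (y == b)) => [/eqP Eyb|yb]; last by rewrite submx1.
    subst y. rewrite mxe_id.
    have Abx : adj b x by rewrite adjC.
    have [j' Ej'] := adj_nb Abx.
    rewrite Ej'; apply: Ho; rewrite -Ej'.
    by apply: contraNneq Sx => ->; exact: side_a.
- move=> v; rewrite /U /W; case: (boolP (side b a v)) => Sv.
    by rewrite capmx0 addsmx0_id !submx_refl.
  case: (boolP (v == b)) => [/eqP Evb|vb].
    subst v; rewrite XfB YfB XY0 /=; exact: XY1.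
  by rewrite /Xf /Yf (negbTE vb) cap0mx adds0mx_id !submx_refl.
- move=> HU; have := HU a; rewrite /U (side_a Hba) => /scalar1_eq0 E.
  by rewrite E eqxx in da.
- move=> HW; have := HW c; rewrite /W (negbTE (side_other Hba Hbc ca)) /Yf.
  have cb : c != b by rewrite eq_sym adj_neq.
  by rewrite (negbTE cb) => /scalar1_eq0.
Qed.



Lemma thin_sub (k : fieldType) m : m = 0%N ->
  forall m1 (A : 'M[k]_(m1, m)) m2 (B : 'M[k]_(m2, m)), (A <= B)%MS.
Proof. by move=> E; subst m => m1 A m2 B; rewrite (thinmx0 A) sub0mx. Qed.

Lemma zero_sink n k p (M : rep n k p) (b a c : vert n) :
  indecomposable M -> is_sink p b -> dim M b = 0%N -> adj b a -> adj b c ->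
  c != a -> dim M a != 0%N -> dim M c = 0%N.
Proof.
move=> Hi Sb db Hba Hbc ca da.
apply: (@split_decomp n k p M b a 0 0) => //; try exact: thin_sub.
- by apply/andP; split; apply: thin_sub.
- by apply/andP; split; apply: thin_sub.
- by move=> j _; apply: thin_sub.
Qed.

Lemma rank_sumsmx_le (k : fieldType) m (I : finType) (P : pred I) (G : I -> 'M[k]_m) :
  (\rank (\sum_(i | P i) G i)%MS <= \sum_(i | P i) \rank (G i))%N.
Proof.
elim/big_rec2: _ => [|i r B Pi IH]; first by rewrite mxrank0.
apply: leq_trans (mxrank_adds_leqif _ _) _.
by rewrite leq_add2l.
Qed.

Lemma inj_sink n k p (M : rep n k p) (b a c : vert n) :
  indecomposable M -> is_sink p b -> \rank (kermx (inmap M b)) = 0%N ->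
  adj b a -> adj b c -> c != a -> dim M a != 0%N -> dim M c = 0%N.
Proof.
move=> Hi Sb rk0 Hba Hbc ca da.
have [j Ej] := adj_nb Hba.
pose G i := <<arr M (nb b i) b>>%MS.
pose X := G j.
pose O := (\sum_(i | i != j) G i)%MS.
pose C := ((X + O)^C)%MS.
pose Y := (O + C)%MS.
have rkin : \rank (inmap M b) = (\sum_i dim M (nb b i))%N.
  move: rk0; rewrite mxrank_ker => /eqP; rewrite subn_eq0 => H.
  by apply/eqP; rewrite eqn_leq rank_leq_row H.
have rkXO : \rank (X + O)%MS = (\sum_i dim M (nb b i))%N.
  rewrite -rkin /inmap eqmx_col (bigD1 j) //.
have rkX : (\rank X <= dim M (nb b j))%N by rewrite /X /G genmxE rank_leq_row.
have rkO : (\rank O <= \sum_(i | i != j) dim M (nb b i))%N.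
  apply: leq_trans (rank_sumsmx_le _ _) _; apply: leq_sum => i _.
  by rewrite /G genmxE rank_leq_row.
have dXO : (X :&: O <= (0 : 'M_(dim M b)))%MS.
  rewrite -(geq_leqif (mxrank_adds_leqif X O)) rkXO (bigD1 j) //=.
  exact: leq_add.
have rXO : \rank (X + O)%MS = (\rank X + \rank O)%N.
  by apply: mxrank_disjoint_sum; apply/eqP; rewrite -submx0.
have fullXY : (1%:M <= X + Y)%MS.
  by rewrite /Y addsmxA sub1mx; exact: addsmx_compl_full.
have rXY : \rank (X + Y)%MS = dim M b.
  by apply/eqP; rewrite eqn_leq rank_leq_col -{1}(mxrank1 k (dim M b)) mxrankS.
have dXY : (X :&: Y <= (0 : 'M_(dim M b)))%MS.
  rewrite -(geq_leqif (mxrank_adds_leqif X Y)) rXY.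
  apply: (@leq_trans (\rank X + (\rank O + \rank C))%N).
    by rewrite leq_add2l /Y (mxrank_adds_leqif O C).
  have := rank_leq_col (X + O)%MS.
  by rewrite /C mxrank_compl rXO; lia.
apply: (@split_decomp n k p M b a X Y) => //.
- by apply/andP; split; rewrite ?sub0mx.
- by apply/andP; split; rewrite ?submx1.
- by rewrite Ej /X /G genmxE.
move=> j' ne; have jj : j' != j by apply: contraNneq ne => ->; rewrite Ej.
apply: (submx_trans _ (addsmxSl O C)).
by apply: (sumsmx_sup j') => //; rewrite /G genmxE.
Qed.

Local Close Scope ring_scope.


Lemma sig_src n k p (M : rep n k p) v :
  ~~ is_sink p v -> dim (sigma M) v = dim M v.
Proof. by move=> H; rewrite /= /sig_dim (negbTE H). Qed.

Lemma sig_sink n k p (M : rep n k p) v :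
  is_sink p v -> dim (sigma M) v = \rank (kermx (inmap M v)).
Proof. by move=> H; rewrite /= /sig_dim H. Qed.

Lemma sink_nb_src n p (v u : vert n) : adj v u -> is_sink p v -> ~~ is_sink p u.
Proof. by move=> H; rewrite /is_sink (adj_parity H); case: (odd _); case: p. Qed.

Lemma src_nb_sink n p (v u : vert n) : adj v u -> ~~ is_sink p v -> is_sink p u.
Proof. by move=> H; rewrite /is_sink (adj_parity H); case: (odd _); case: p. Qed.

Lemma sig_new n k p (M : rep n k p) v i :
  is_sink p v -> dim M v = 0%N -> dim M (nb v i) != 0%N -> dim (sigma M) v != 0%N.
Proof.
move=> Sv dv di; rewrite sig_sink // mxrank_ker.
have : (\rank (inmap M v) <= 0)%N by rewrite -{2}dv rank_leq_col.
rewrite leqn0 => /eqP ->; rewrite subn0.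
apply: contra di; rewrite -!leqn0 => H; apply: leq_trans H.
by rewrite (bigD1 i) //= leq_addr.
Qed.

Lemma sig_nz_nb n k p (M : rep n k p) v :
  is_sink p v -> dim (sigma M) v != 0%N -> exists i, dim M (nb v i) != 0%N.
Proof.
move=> Sv; rewrite sig_sink // => H.
case: (pickP (fun i => dim M (nb v i) != 0%N)) => [i Hi|H0]; first by exists i.
have E : (\sum_(i < n) dim M (nb v i))%N = 0%N.
  by apply/eqP; rewrite sum_nat_eq0; apply/forallP => i; have := H0 i; rewrite /=; case: (dim M _).
by move: H; rewrite mxrank_ker {1}E.
Qed.

Lemma interior_in n k p (M : rep n k p) (l : seq (vert n)) i :
  indecomposable M -> path_in (sigma M) l -> 0 < i -> i.+1 < size l ->
  dim M (nth (root n) l i) != 0%N.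
Proof.
move=> Hi /andP[/tpathP[s0 Ha Hnb] /allP Hall] i0 il.
set v := nth (root n) l i.
have Hv : dim (sigma M) v != 0%N by apply: Hall; rewrite mem_nth // ltnW.
case: (boolP (is_sink p v)) => Sv; last by rewrite -sig_src.
set u := nth (root n) l i.-1; set w := nth (root n) l i.+1.
have Auv : adj v u by rewrite adjC /v /u; have := Ha i.-1; rewrite prednK //; apply; lia.
have Avw : adj v w by apply: Ha.
have uw : w != u by rewrite eq_sym /u /w; have := Hnb i.-1; rewrite -(prednK i0); apply; lia.
have du : dim M u != 0%N.
  rewrite -sig_src; last exact: sink_nb_src Auv Sv.
  by apply: Hall; apply: mem_nth; apply: leq_ltn_trans (leq_pred i) (ltnW il).
have dw : dim M w != 0%N.
  rewrite -sig_src; last exact: sink_nb_src Avw Sv.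
  by apply: Hall; apply: mem_nth.
apply/negP=> /eqP dv.
by move/eqP: dw; apply; apply: (zero_sink Hi Sv dv Auv Avw uw du).
Qed.


Lemma bound_sig n k p (M : rep n k p) (r : nat) (c : vert n) l :
  indecomposable M ->
  (forall l, path_in M l -> size l <= (2 * r).+1) ->
  (forall l, is_diam M l -> nth (root n) l r = c) ->
  path_in (sigma M) l ->
  size l <= (2 * r).+3 /\
  (size l = (2 * r).+3 -> [/\ is_sink p (head (root n) l),
      is_sink p (last (root n) l) & nth (root n) l r.+1 = c]).
Proof.
move=> Hi Hmax Hc.
case: l => [|x l1] Hl; first by split=> //; case: r {Hmax Hc}.
case/lastP: l1 Hl => [|m y] Hl; first by split=> //=; lia.
have El : x :: rcons m y = [:: x] ++ m ++ [:: y] by rewrite cats1.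
have sl : size (x :: rcons m y) = (size m).+2 by rewrite /= size_rcons.
rewrite sl.
case: (posnP (size m)) => [m0|m0]; first by split; rewrite m0 //; lia.
have Hin : {in m, forall v, dim M v != 0%N}.
  move=> v /(nthP (root n)) [i im0 <-].
  have im : (i < size m)%N := im0.
  have := interior_in (i := i.+1) Hi Hl; rewrite /= nth_rcons im; apply => //.
  by rewrite size_rcons; lia.
move: (Hl) => /andP[Ht /allP Hall].
have Hm : path_in M m.
  rewrite /path_in (tpath_infix (s1 := [:: x]) (s3 := [:: y])) -?El //=.
  exact/allP.
have sm := Hmax m Hm.
split; first by lia.
move=> E.
have sm' : size m = (2 * r).+1 by lia.
have dx : dim M x = 0%N.
  apply/eqP; apply: contraT => dx.
  have : path_in M (x :: m).
    rewrite /path_in (tpath_infix (s1 := [::]) (s3 := [:: y])) /=.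
    - by rewrite dx; exact/allP.
    - by rewrite cats1.
    - by [].
  by move/Hmax => /=; lia.
have dy : dim M y = 0%N.
  apply/eqP; apply: contraT => dy.
  have : path_in M (rcons m y).
    rewrite /path_in (tpath_infix (s1 := [:: x]) (s3 := [::])) /=.
    - apply/allP=> v; rewrite mem_rcons inE => /orP[/eqP->//|]; exact: Hin.
    - by rewrite cats0.
    - by rewrite size_rcons.
  by move/Hmax; rewrite size_rcons; lia.
have sinkof v : v \in x :: rcons m y -> dim M v = 0%N -> is_sink p v.
  move=> vin dv; apply: contraT => Sv; have := Hall v vin.
  by rewrite sig_src // dv.
split.
- by apply: sinkof; rewrite ?inE ?eqxx.
- by rewrite /= last_rcons; apply: sinkof => //; rewrite inE mem_rcons inE eqxx orbT.
rewrite /= nth_rcons ifT; last by lia.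
apply: Hc; split=> // l' Hl'; rewrite sm'; exact: Hmax.
Qed.


Lemma pick_nb n (hn : 3 <= n) (x u w : vert n) :
  exists i, (nb x i != u) && (nb x i != w).
Proof.
case: (pickP (fun i => (nb x i != u) && (nb x i != w))) => [i Hi|H]; first by exists i.
have H' i : (nb x i == u) || (nb x i == w).
  by have := H i; rewrite /=; case: (nb x i == u); case: (nb x i == w).
pose i0 := Ordinal (leq_trans (isT : 0 < 3) hn).
pose i1 := Ordinal (leq_trans (isT : 1 < 3) hn).
pose i2 := Ordinal (leq_trans (isT : 2 < 3) hn).
have d01 : i0 != i1 by []. have d02 : i0 != i2 by []. have d12 : i1 != i2 by [].
have inj := @nb_inj n x.
case/orP: (H' i0) => /eqP E0; case/orP: (H' i1) => /eqP E1;
  case/orP: (H' i2) => /eqP E2; exfalso.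
- by move/eqP: d01; apply; apply: inj; rewrite E0 E1.
- by move/eqP: d01; apply; apply: inj; rewrite E0 E1.
- by move/eqP: d02; apply; apply: inj; rewrite E0 E2.
- by move/eqP: d12; apply; apply: inj; rewrite E1 E2.
- by move/eqP: d12; apply; apply: inj; rewrite E1 E2.
- by move/eqP: d02; apply; apply: inj; rewrite E0 E2.
- by move/eqP: d01; apply; apply: inj; rewrite E0 E1.
- by move/eqP: d01; apply; apply: inj; rewrite E0 E1.
Qed.

Lemma path_nbrs n (l : seq (vert n)) i :
  is_tpath l -> 0 < i -> i.+1 < size l ->
  [/\ adj (nth (root n) l i) (nth (root n) l i.-1),
      adj (nth (root n) l i) (nth (root n) l i.+1) &
      nth (root n) l i.+1 != nth (root n) l i.-1].
Proof.
move=> /tpathP[_ Ha Hnb] i0 il; split.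
- by rewrite adjC; have := Ha i.-1; rewrite prednK //; apply; lia.
- exact: Ha.
by rewrite eq_sym; have := Hnb i.-1; rewrite -(prednK i0); apply; lia.
Qed.

Lemma exists_long n k p (M : rep n k p) r l0 (hn : 3 <= n) :
  indecomposable M -> path_in M l0 -> size l0 = (2 * r).+1 ->
  (forall l, path_in M l -> size l <= (2 * r).+1) ->
  ~~ is_sink p (nth (root n) l0 0) -> ~~ is_sink p (nth (root n) l0 (2 * r)) ->
  exists L, path_in (sigma M) L /\ size L = (2 * r).+3.
Proof.
move=> Hi /andP[Ht0 /allP Hall0] s0 Hmax S0 Se.
set a0 := nth (root n) l0 0; set ae := nth (root n) l0 (2 * r).
have [i0 /andP[H0 _]] := pick_nb hn a0 (nth (root n) l0 1) (nth (root n) l0 1).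
set b0 := nb a0 i0.
have [ie /andP[He1 He2]] := pick_nb hn ae (nth (root n) l0 (2 * r).-1) b0.
set be := nb ae ie.
have Ab0 : adj b0 a0 by rewrite adjC nb_adj.
have Abe : adj be ae by rewrite adjC nb_adj.
have Tbe : is_tpath (be :: rev l0).
  apply: tpath_cons; first by rewrite tpath_revE.
    by rewrite nth_rev ?s0 // subn1 /=.
  rewrite size_rev s0 => r0; rewrite nth_rev ?s0; last by lia.
  by have -> : ((2 * r).+1 - 2 = (2 * r).-1)%N by lia.
have Tb0 : is_tpath (b0 :: l0).
  by apply: tpath_cons => // _; exact: H0.
have db0 : dim M b0 = 0%N.
  apply/eqP; apply: contraT => d.
  have : path_in M (b0 :: l0) by rewrite /path_in Tb0 /= d; exact/allP.
  by move/Hmax => /=; lia.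
have dbe : dim M be = 0%N.
  apply/eqP; apply: contraT => d.
  have : path_in M (be :: rev l0).
    by rewrite /path_in Tbe /= d all_rev; exact/allP.
  by move/Hmax => /=; rewrite size_rev; lia.
exists (b0 :: rcons l0 be); split; last by rewrite /= size_rcons s0.
apply/andP; split.
  apply: tpath_cons.
  - by rewrite -tpath_revE rev_rcons.
  - by rewrite nth_rcons s0 /=.
  rewrite size_rcons s0 nth_rcons s0 => _.
  case: ifP => [_|h1]; first exact: H0.
  have r0 : r = 0%N by move/negbT: h1; lia.
  by move: He2; rewrite r0 /= eq_sym.
apply/allP=> v; rewrite inE mem_rcons inE => /or3P[/eqP->|/eqP->|vin].
- have [j Ej] := adj_nb Ab0.
  have Aab : adj a0 b0 by rewrite adjC.
  apply: (sig_new (i := j)) => //; first exact: src_nb_sink Aab S0.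
  by rewrite -Ej; apply: Hall0; rewrite mem_nth // s0.
- have [j Ej] := adj_nb Abe.
  have Aeb : adj ae be by rewrite adjC.
  apply: (sig_new (i := j)) => //; first exact: src_nb_sink Aeb Se.
  by rewrite -Ej; apply: Hall0; rewrite mem_nth // s0.
move: vin => /(nthP (root n)) [i il0 <-].
have il : (i < size l0)%N := il0.
case: (boolP (is_sink p (nth (root n) l0 i))) => Sv; last first.
  by rewrite sig_src //; apply: Hall0; rewrite mem_nth.
have ipos : 0 < i.
  by case: i {il0} il Sv => // _ Sv; rewrite Sv in S0.
have ilt : i.+1 < size l0.
  rewrite s0 ltnS ltn_neqAle -ltnS -s0 il andbT.
  by apply: contraTneq Sv => ->.
have [Au Aw uw] := path_nbrs Ht0 ipos ilt.
have dw : dim M (nth (root n) l0 i.+1) != 0%N by apply: Hall0; rewrite mem_nth.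
have du : dim M (nth (root n) l0 i.-1) != 0%N.
  by apply: Hall0; rewrite mem_nth //; apply: leq_ltn_trans (leq_pred i) il.
apply/negP => /eqP d0; move: d0; rewrite sig_sink // => d0.
by move/eqP: dw; apply; apply: (inj_sink Hi Sv d0 Au Aw uw du).
Qed.


Lemma src_negE n p (v : vert n) : is_source (~~ p) v = is_sink p v.
Proof. by rewrite /is_source /is_sink; case: (odd _); case: p. Qed.

Lemma fin_dim_sig n k p (M : rep n k p) : fin_dim M -> fin_dim (sigma M).
Proof.
case=> s Hs.
exists (s ++ flatten [seq [seq nb x i | i <- enum 'I_n] | x <- s]) => v Hv.
rewrite mem_cat; case: (boolP (is_sink p v)) => Sv; last first.
  by rewrite Hs // -(sig_src M Sv).
have [i Hi] := sig_nz_nb Sv Hv.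
have Axv : adj (nb v i) v by rewrite adjC nb_adj.
have [j Ej] := adj_nb Axv.
apply/orP; right; apply/flatten_mapP; exists (nb v i); first exact: Hs.
by rewrite {1}Ej; apply/mapP; exists j; rewrite ?mem_enum.
Qed.

Theorem mainTheorem9 (k : fieldType) (n : nat) (hn : (3 <= n)%N) (p : bool)
  (M : rep n k p) (c : vert n) (r : nat) :
  fin_dim M -> regular M -> source_module M -> center_radius M c r ->
  source_module (sigma M) /\ center_radius (sigma M) c r.+1.
Proof.
move=> Hfin [Hi _] [_ [l0 Hl0] Hsrc] Hcr.
have [s0 c0] := Hcr l0 Hl0.
have Hmax : forall l, path_in M l -> size l <= (2 * r).+1.
  by move=> l Hl; rewrite -s0; apply: (proj2 Hl0).
have Hc : forall l, is_diam M l -> nth (root n) l r = c.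
  by move=> l /Hcr [].
have /andP[S0 Se] := Hsrc l0 Hl0.
have [L [HL sL]] : exists L, path_in (sigma M) L /\ size L = (2 * r).+3.
  apply: (exists_long hn Hi (proj1 Hl0) s0 Hmax).
  - by rewrite nth0.
  - by have := nth_last (root n) l0; rewrite s0 /= => ->.
have Hb := fun l => bound_sig (l := l) Hi Hmax Hc.
have Hd : forall l, is_diam (sigma M) l -> size l = (2 * r).+3.
  move=> l [Hl Hm]; have := Hm L HL; have := (Hb l Hl).1; rewrite sL; lia.
split.
  split; first exact: fin_dim_sig.
    exists L; split => // l Hl; rewrite sL; exact: (Hb l Hl).1.
  move=> l Hl; have [Sh Sl _] := (Hb l (proj1 Hl)).2 (Hd l Hl).
  by rewrite !src_negE Sh Sl.
move=> l Hl; have [_ _ Ec] := (Hb l (proj1 Hl)).2 (Hd l Hl).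
by split => //; rewrite (Hd l Hl); lia.
Qed.
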